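(* For any two choices $\boldsymbol{w}^{(1)}=\{w^{(1)}_1,\dots,w^{(1)}_{15}\}$ and $\boldsymbol{w}^{(2)}=\{w^{(2)}_1,\dots,w^{(2)}_{15}\}$ with $v_{w^{(1)}_i},v_{w^{(2)}_i}\in V_i$ for all $i$, the graphs $G^{\boldsymbol{w}^{(1)}}$ and $G^{\boldsymbol{w}^{(2)}}$ are isomorphic.
   Context: The $E_8$ root system $\Psi_{E_8}\subset\mathbb{R}^8$ consists of the 240 vectors $\pm e_i\pm e_j$ ($1\le i<j\le 8$) and all $x\in\{\pm1\}^8$ with $\prod_i x_i=1$. $G_{E_8}$ is the graph with vertices $v_x$, $x\in\Psi_{E_8}$, where $v_x=v_{-x}$, and $v_x\sim v_y$ iff $\langle x,y\rangle=0$. Let $I=\mathrm{diag}(1,1)$, $X=\begin{pmatrix}0&1\\1&0\end{pmatrix}$, $Z=\mathrm{diag}(1,-1)$, $Y=XZ$. For $M=M_1\otimes M_2\otimes M_3$ with $M_i\in\{I,X,Y,Z\}$, $\sigma_M:v_x\mapsto v_{Mx}$ is an automorphism of $G_{E_8}$ and $L=\{\sigma_M\}\cong\mathbb{Z}_2^6$. Let $V_1,\dots,V_{15}$ be the 15 orbits of $L$ on $V(G_{E_8})$. Given vectors $\boldsymbol{w}=\{w_1,\dots,w_{15}\}\subset\Psi_{E_8}$ with $v_{w_i}\in V_i$, the graph $G^{\boldsymbol{w}}$ has vertex set $V(G_{E_8})$; for $s\in V_i$, $t\in V_j$: if $\langle w_i,w_j\rangle\neq0$ then $s\sim t$ in $G^{\boldsymbol{w}}$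 iff $s\sim t$ in $G_{E_8}$; if $\langle w_i,w_j\rangle=0$ then $s\sim t$ in $G^{\boldsymbol{w}}$ iff $s\not\sim t$ in $G_{E_8}$. *)

(* Defs.v *)
From HB Require Import structures.
From mathcomp Require Import all_boot all_order all_algebra.
Set Implicit Arguments. Unset Strict Implicit. Unset Printing Implicit Defensive.
Import GRing.Theory Num.Theory.
Local Open Scope ring_scope.

(* Vectors of R^8 with coordinates in {-1,0,1}: value k : 'I_3 encodes k - 1.
   Every E8 root (in the paper's normalisation) has such coordinates. *)
Definition Vec := {ffun 'I_8 -> 'I_3}.

Definition coord (x : Vec) (i : 'I_8) : int := ((x i : nat)%:Z - 1)%R.

Definition dot (x y : Vec) : int := \sum_(i < 8) coord x i * coord y i.

Definition is_root (x : Vec) : bool :=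
  (#|[pred i | coord x i != 0]| == 2)%N
  || ([forall i, coord x i != 0] && (\prod_(i < 8) coord x i == 1)).

Definition negv (x : Vec) : Vec := [ffun i => inord (2 - (x i : nat))%N].

Definition is_vertex (A : {set Vec}) : bool :=
  [exists x, is_root x && (A == [set x; negv x])].

Definition Vertex := {A : {set Vec} | is_vertex A}.

(* v_x ~ v_y in G_{E8} iff <x,y> = 0 (independent of the sign choice). *)
Definition adjE8 (u v : Vertex) : bool :=
  [exists x in val u, exists y in val v, dot x y == 0].

(* Pauli matrices, indexed 0=I, 1=X, 2=Y=XZ, 3=Z; entries (r,c) with r,c in {0,1}. *)
Definition pauli (p : 'I_4) (r c : nat) : int :=
  match nat_of_ord p with
  | 0 => if r == c then 1 else 0
  | 1 => if r != c then 1 else 0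
  | 2 => if (r == 0%N) && (c == 1%N) then -1 else if (r == 1%N) && (c == 0%N) then 1 else 0
  | _ => if r == c then (if r == 0%N then 1 else -1) else 0
  end.

(* Kronecker product M1 (x) M2 (x) M3, index i <-> bits (i/4, (i/2)%2, i%2). *)
Definition tens3 (p : 'I_4 * 'I_4 * 'I_4) (i j : 'I_8) : int :=
  pauli p.1.1 (i %/ 4) (j %/ 4) * pauli p.1.2 ((i %/ 2) %% 2) ((j %/ 2) %% 2)
  * pauli p.2 (i %% 2) (j %% 2).

Definition applyM (p : 'I_4 * 'I_4 * 'I_4) (x : Vec) (i : 'I_8) : int :=
  \sum_(j < 8) tens3 p i j * coord x j.

Definition sameOrbit (u v : Vertex) : bool :=
  [exists p, exists x in val u, exists y in val v,
     [forall i, coord y i == applyM p x i]].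

(* A choice w = {w_1,...,w_15}: encoded as a map assigning to each vertex s the
   vector w_i of its orbit V_i; it is constant on orbits, w_i is a root, and
   v_{w_i} lies in V_i. *)
Definition valid_choice (w : Vertex -> Vec) : Prop :=
  (forall s, is_root (w s) /\ exists u : Vertex, w s \in val u /\ sameOrbit s u)
  /\ (forall s t, sameOrbit s t -> w s = w t).

Definition adjGw (w : Vertex -> Vec) (s t : Vertex) : bool :=
  if dot (w s) (w t) != 0 then adjE8 s t else ~~ adjE8 s t.

(* Main.v *)
Require Import Defs.
From mathcomp Require Import all_boot all_order all_algebra.
From HB Require Import structures.
From mathcomp Require Import zify.
From Stdlib Require Import PeanoNat.
Set Implicit Arguments. Unset Strict Implicit. Unset Printing Implicit Defensive.
Import GRing.Theory Num.Theory.
Local Open Scope ring_scope.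


Definition o8 (i : nat) : 'I_8 := @Ordinal 8 (i %% 8) (ltn_pmod i (isT : (0 < 8)%N)).
Definition o4 (i : nat) : 'I_4 := @Ordinal 4 (i %% 4) (ltn_pmod i (isT : (0 < 4)%N)).
Definition dec4 (k : nat) : 'I_4 := o4 (nth 0%N [:: 0; 1; 3; 2]%N k).
Definition trn (n : nat) : 'I_4 * 'I_4 * 'I_4 :=
  (dec4 (n %/ 16), dec4 ((n %/ 4) %% 4), dec4 (n %% 4)).
Definition tn (n i j : nat) : int := tens3 (trn n) (o8 i) (o8 j).
Definition pm0 (n i : nat) : nat := find (fun j => tn n i j != 0) (iota 0 8).
Definition pmT := Eval vm_compute in [seq [seq pm0 n i | i <- iota 0 8] | n <- iota 0 64].
Definition psT := Eval vm_compute in [seq [seq tn n i (pm0 n i) | i <- iota 0 8] | n <- iota 0 64].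
Definition pmf (n i : nat) : nat := nth 0%N (nth [::] pmT n) i.
Definition psf (n i : nat) : int := nth 0 (nth [::] psT n) i.
Definition capp (n : nat) (l : seq int) : seq int :=
  [seq psf n i * nth 0 l (pmf n i) | i <- iota 0 8].
Fixpoint cdot (u v : seq int) : int :=
  match u, v with a :: u', b :: v' => a * b + cdot u' v' | _, _ => 0 end.
Definition orth u v := cdot u v == 0.
Definition negl (l : seq int) := map (fun z => - z) l.
Definition peq (u v : seq int) := (u == v) || (u == negl v).
Definition linb (d : seq bool) (n : nat) :=
  foldr (fun k acc => (Nat.testbit n k && nth false d k) (+) acc) false (iota 0 6).
Definition trits : seq int := [:: -1; 0; 1].
Definition all8 : seq (seq int) :=
  iter 8 (fun s => flatten [seq [seq a :: t | t <- s] | a <- trits]) [:: [::]].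
Definition croot (l : seq int) :=
  (count (fun z => z != 0) l == 2%N) || (all (fun z => z != 0) l && (foldr *%R 1 l == 1)).
Definition croots := filter croot all8.
Fixpoint posfirst (l : seq int) : bool :=
  match l with [::] => false | a :: l' => if a == 0 then posfirst l' else a == 1 end.
Definition reps := filter posfirst croots.

Definition affcheck :=
  all (fun y => let ys := map (fun n => capp n y) (iota 0 64) in
     all (fun x => has (fun z => peq z x) ys ||
        (let ph := map (orth x) ys in
         let f0 := nth false ph 0 in
         let d := [seq nth false ph (2 ^ k)%N (+) f0 | k <- iota 0 6] in
         all (fun p => p.2 == f0 (+) linb d p.1) (zip (iota 0 64) ph))) reps) reps.

Definition k1check := all (fun n => all (fun i => all (fun j =>
   tens3 (trn n) (o8 i) (o8 j) == (if j == pmf n i then psf n i else 0)) (iota 0 8)) (iota 0 8)) (iota 0 64).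
Definition cc n m := psf n 0 * psf m (pmf n 0) * psf (Nat.lxor n m) 0.
Definition k3check := all (fun n => all (fun m =>
   (Nat.lxor n m < 64)%N && ((cc n m == 1) || (cc n m == -1)) &&
   all (fun i => (pmf m (pmf n i) == pmf (Nat.lxor n m) i) &&
       (psf n i * psf m (pmf n i) == cc n m * psf (Nat.lxor n m) i)) (iota 0 8)) (iota 0 64)) (iota 0 64).
Definition k4check := all (fun n => perm_eq (map (pmf n) (iota 0 8)) (iota 0 8) &&
   all (fun i => (psf n i == 1) || (psf n i == -1)) (iota 0 8)) (iota 0 64).
Definition k5check := all (fun l => all (fun n => croot (capp n l) && all (fun z => z \in trits) (capp n l)) (iota 0 64)) croots.
Definition k7check := all (fun x => (x \in reps) || (negl x \in reps)) croots.
Definition k8check := all (fun x => cdot x x != 0) croots.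

Lemma k1 : k1check. Proof. vm_compute. reflexivity. Qed.
Lemma k3 : k3check. Proof. vm_compute. reflexivity. Qed.
Lemma k4 : k4check. Proof. vm_compute. reflexivity. Qed.
Lemma k5 : k5check. Proof. vm_compute. reflexivity. Qed.
Lemma k7 : k7check. Proof. vm_compute. reflexivity. Qed.
Lemma k8 : k8check. Proof. vm_compute. reflexivity. Qed.
Lemma kaff : affcheck. Proof. vm_compute. reflexivity. Qed.


Lemma size_capp n l : size (capp n l) = 8%N.
Proof. by rewrite size_map size_iota. Qed.

Lemma nth_capp n l i : (i < 8)%N -> nth 0 (capp n l) i = psf n i * nth 0 l (pmf n i).
Proof. by move=> hi; rewrite (nth_map 0%N) ?size_iota // nth_iota. Qed.

Lemma nth_negl l k : nth 0 (negl l) k = - nth 0 l k.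
Proof. by elim: l k => [|a l IH] [|k] /=; rewrite ?oppr0. Qed.

Lemma size_negl l : size (negl l) = size l. Proof. by rewrite size_map. Qed.

Lemma neglK l : negl (negl l) = l.
Proof. by rewrite /negl -map_comp map_id_in // => z _ /=; rewrite opprK. Qed.

Lemma cdot_negll u v : cdot (negl u) v = - cdot u v.
Proof. elim: u v => [|a u IH] [|b v] /=; rewrite ?oppr0 // IH mulNr opprD //. Qed.

Lemma cdot_neglr u v : cdot u (negl v) = - cdot u v.
Proof. elim: u v => [|a u IH] [|b v] /=; rewrite ?oppr0 // IH mulrN opprD //. Qed.

Lemma capp_negl n l : capp n (negl l) = negl (capp n l).
Proof. rewrite /capp /negl -map_comp; apply: eq_map => i /=; by rewrite nth_negl mulrN. Qed.

Lemma peq_refl u : peq u u. Proof. by rewrite /peq eqxx. Qed.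
Lemma peqP u v : reflect (u = v \/ u = negl v) (peq u v).
Proof. rewrite /peq; apply: (iffP orP) => -[] /eqP; auto. Qed.
Lemma peq_sym u v : peq u v = peq v u.
Proof. by apply/peqP/peqP => -[] ->; rewrite ?neglK; auto. Qed.
Lemma peq_trans u v w : peq u v -> peq v w -> peq u w.
Proof.
move=> /peqP [] -> /peqP [] ->; apply/peqP; rewrite ?neglK; auto.
Qed.
Lemma peq_neglr u v : peq u (negl v) = peq u v.
Proof. by rewrite /peq neglK orbC. Qed.

Lemma peq_negll u v : peq (negl u) v = peq u v.
Proof. by rewrite peq_sym peq_neglr peq_sym. Qed.

Lemma orth_peql u u' v : peq u u' -> orth u v = orth u' v.
Proof. move=> /peqP [] -> //; by rewrite /orth cdot_negll oppr_eq0. Qed.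
Lemma orth_peqr u v v' : peq v v' -> orth u v = orth u v'.
Proof. move=> /peqP [] -> //; by rewrite /orth cdot_neglr oppr_eq0. Qed.

Lemma capp_peq n l l' : peq l l' -> peq (capp n l) (capp n l').
Proof. move=> /peqP [] ->; rewrite ?capp_negl ?peq_negll; exact: peq_refl. Qed.

Lemma k3P n m : (n < 64)%N -> (m < 64)%N ->
  [/\ (Nat.lxor n m < 64)%N, (cc n m == 1) || (cc n m == -1) &
   forall i, (i < 8)%N -> pmf m (pmf n i) = pmf (Nat.lxor n m) i /\
       psf n i * psf m (pmf n i) = cc n m * psf (Nat.lxor n m) i].
Proof.
move=> hn hm; have := k3; rewrite /k3check => /allP /(_ n).
rewrite mem_iota add0n => /(_ hn) /allP /(_ m); rewrite mem_iota add0n => /(_ hm).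
case/andP => /andP [h1 h2] /allP h3; split => // i hi.
have hi' : i \in iota 0 8 by rewrite mem_iota add0n.
by have /andP [/eqP -> /eqP ->] := h3 i hi'.
Qed.

Lemma k4P n : (n < 64)%N -> perm_eq (map (pmf n) (iota 0 8)) (iota 0 8) /\
   forall i, (i < 8)%N -> (psf n i == 1) || (psf n i == -1).
Proof.
move=> hn; have := k4; rewrite /k4check => /allP /(_ n).
rewrite mem_iota add0n => /(_ hn) /andP [h1 /allP h2]; split => // i hi.
by apply: h2; rewrite mem_iota add0n.
Qed.

Lemma pmf_lt n i : (n < 64)%N -> (i < 8)%N -> (pmf n i < 8)%N.
Proof.
move=> hn hi; have [hp _] := k4P hn.
have : pmf n i \in map (pmf n) (iota 0 8) by apply: map_f; rewrite mem_iota.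
by rewrite (perm_mem hp) mem_iota.
Qed.

Lemma capp_comp n m l : (n < 64)%N -> (m < 64)%N ->
  peq (capp n (capp m l)) (capp (Nat.lxor n m) l).
Proof.
move=> hn hm; have [_ hc hi] := k3P hn hm.
have E : capp n (capp m l) = map (fun z => cc n m * z) (capp (Nat.lxor n m) l).
  apply: (@eq_from_nth _ 0); first by rewrite size_capp size_map size_capp.
  move=> i; rewrite size_capp => i8.
  rewrite nth_capp // nth_capp ?pmf_lt // (nth_map 0) ?size_capp // nth_capp //.
  have [e1 e2] := hi i i8; by rewrite mulrA e2 e1 mulrA.
rewrite E; case/orP: hc => /eqP ->.
  by rewrite map_id_in ?peq_refl // => z _; rewrite mul1r.
have -> : map (fun z => -1 * z) (capp (Nat.lxor n m) l) = negl (capp (Nat.lxor n m) l).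
  by apply: eq_map => z; rewrite mulN1r.
by rewrite /peq eqxx orbT.
Qed.

Lemma capp0 l : size l = 8%N -> capp 0 l = l.
Proof.
move=> hl; apply: (@eq_from_nth _ 0); first by rewrite size_capp hl.
move=> i; rewrite size_capp => i8; rewrite nth_capp //.
have : all (fun i => (psf 0 i == 1) && (pmf 0 i == i)) (iota 0 8) by vm_compute.
move=> /allP /(_ i); rewrite mem_iota add0n => /(_ i8) /andP [/eqP -> /eqP ->].
by rewrite mul1r.
Qed.

Lemma cdot_sumg u v : size u = size v -> cdot u v = \sum_(i <- iota 0 (size u)) u`_i * v`_i.
Proof.
elim: u v => [|a u IH] [|b v] //=; first by rewrite big_nil.
move=> [/IH ->]; rewrite big_cons /=; congr (_ + _).
by rewrite -(addn0 1%N) iotaDl big_map.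
Qed.

Lemma cdot_sum u v : size u = 8%N -> size v = 8%N ->
  cdot u v = \sum_(i <- iota 0 8) u`_i * v`_i.
Proof. by move=> hu hv; rewrite cdot_sumg hu // hv. Qed.

Lemma capp_iso n u v : (n < 64)%N -> size u = 8%N -> size v = 8%N ->
  cdot (capp n u) (capp n v) = cdot u v.
Proof.
move=> hn hu hv; rewrite !cdot_sum ?size_capp //.
have [hp hs] := k4P hn.
rewrite -[RHS](perm_big _ hp) big_map big_seq [RHS]big_seq; apply: eq_bigr => i.
rewrite mem_iota add0n => hi; rewrite !nth_capp //.
have : psf n i * psf n i = 1 by case/orP: (hs i hi) => /eqP ->.
move=> h; by rewrite mulrACA h mul1r.
Qed.

Lemma capp_invol n l : (n < 64)%N -> size l = 8%N -> peq (capp n (capp n l)) l.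
Proof.
move=> hn hl; apply: peq_trans (capp_comp _ hn hn) _.
by rewrite Nat.lxor_nilpotent capp0 // peq_refl.
Qed.

Lemma orth_capp2 n m u v : (n < 64)%N -> (m < 64)%N -> size u = 8%N -> size v = 8%N ->
  orth (capp n u) (capp m v) = orth u (capp (Nat.lxor n m) v).
Proof.
move=> hn hm hu hv; have [hx _ _] := k3P hn hm.
have h1 : peq (capp m v) (capp n (capp (Nat.lxor n m) v)).
  rewrite peq_sym; have := capp_comp v hn hx.
  by rewrite -Nat.lxor_assoc Nat.lxor_nilpotent Nat.lxor_0_l.
rewrite (orth_peqr _ h1) /orth capp_iso // size_capp //.
Qed.

Lemma linbD d a b : linb d (Nat.lxor a b) = linb d a (+) linb d b.
Proof.
rewrite /linb; elim: (iota 0 6) => [|k ks IH] //=.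
rewrite IH Nat.lxor_spec.
move: (foldr _ _ ks) (foldr _ _ ks) => A B.
by case: (Nat.testbit a k); case: (Nat.testbit b k); case: (nth false d k); case: A; case: B.
Qed.

Lemma croots_shape l : l \in croots -> size l = 8%N /\ all (fun z => z \in trits) l.
Proof.
have : all (fun l => (size l == 8%N) && all (fun z => z \in trits) l) croots by vm_compute.
by move=> /allP H /H /andP [/eqP].
Qed.

Lemma reps_croots l : l \in reps -> l \in croots.
Proof. by rewrite mem_filter => /andP []. Qed.

Lemma aff_reps x y : x \in reps -> y \in reps ->
  (forall n, (n < 64)%N -> ~~ peq (capp n y) x) ->
  exists d, forall n, (n < 64)%N -> orth x (capp n y) = orth x (capp 0 y) (+) linb d n.
Proof.
move=> hx hy hno; have := kaff; rewrite /affcheck => /allP /(_ y hy); cbv beta.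
move=> /allP /(_ x hx); cbv beta.
set ys := map _ (iota 0 64).
have -> : has (fun z => peq z x) ys = false.
  apply/negbTE/hasPn => z /mapP [n]; rewrite mem_iota add0n => hn ->; exact: hno.
rewrite orFb; set ph := map (orth x) ys.
have phE : forall n, (n < 64)%N -> nth false ph n = orth x (capp n y).
  move=> n hn; rewrite (nth_map [::]) ?size_map ?size_iota //.
  by rewrite (nth_map 0%N) ?size_iota // nth_iota.
set d := map _ _ => /allP H; exists d => n hn.
have hsz : size (zip (iota 0 64) ph) = 64%N by rewrite size_zip size_map size_map size_iota minnn.
have hn' : (n < size (zip (iota 0 64) ph))%N by rewrite hsz.
have := H _ (mem_nth (0%N, false) hn').
rewrite nth_zip ?size_map ?size_iota // nth_iota // add0n.
by rewrite phE // phE // => /eqP.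
Qed.

Lemma reps_cover x : x \in croots -> exists2 x', x' \in reps & peq x x'.
Proof.
move=> hx; have := k7; rewrite /k7check => /allP /(_ x hx) /orP [h|h].
  by exists x => //; exact: peq_refl.
by exists (negl x) => //; rewrite peq_neglr peq_refl.
Qed.

Lemma aff x y : x \in croots -> y \in croots ->
  (forall n, (n < 64)%N -> ~~ peq (capp n y) x) ->
  exists d, forall n, (n < 64)%N -> orth x (capp n y) = orth x (capp 0 y) (+) linb d n.
Proof.
move=> hx hy hno.
have [x' hx' ex] := reps_cover hx; have [y' hy' ey] := reps_cover hy.
have E : forall n, orth x (capp n y) = orth x' (capp n y').
  by move=> n; rewrite (orth_peql _ ex) (orth_peqr _ (capp_peq n ey)).
have [d hd] : exists d, forall n, (n < 64)%N -> orth x' (capp n y') = orth x' (capp 0 y') (+) linb d n.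
  apply: aff_reps => // n hn; apply/negP => hp; have := hno n hn.
  by rewrite (peq_trans (capp_peq n ey) (peq_trans hp _)) // peq_sym.
by exists d => n hn; rewrite !E hd.
Qed.


Lemma trn_surj p : exists2 n, (n < 64)%N & trn n = p.
Proof.
have e4 : forall a : 'I_4, exists2 k, (k < 4)%N & dec4 k = a.
  case=> [[|[|[|[|m]]]] hm] //.
  - by exists 0%N => //; apply: val_inj.
  - by exists 1%N => //; apply: val_inj.
  - by exists 3%N => //; apply: val_inj.
  - by exists 2%N => //; apply: val_inj.
case: p => [[a b] c]; have [ka ha <-] := e4 a; have [kb hb <-] := e4 b; have [kc hc <-] := e4 c.
exists (16 * ka + 4 * kb + kc)%N; first lia.
rewrite /trn; congr (dec4 _, dec4 _, dec4 _); lia.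
Qed.

Lemma o8K (i : 'I_8) : o8 i = i.
Proof. by apply: val_inj; rewrite /= modn_small. Qed.

Lemma big8 (R : Type) (idx : R) (op : R -> R -> R) (F : 'I_8 -> R) :
  \big[op/idx]_(i < 8) F i = \big[op/idx]_(k <- iota 0 8) F (o8 k).
Proof.
rewrite (eq_bigr (fun i : 'I_8 => F (o8 i))) => [|i _]; last by rewrite o8K.
by rewrite -(big_mkord xpredT (fun k => F (o8 k))).
Qed.

Definition cv (x : Vec) : seq int := [seq Defs.coord x (o8 i) | i <- iota 0 8].

Lemma size_cv x : size (cv x) = 8%N. Proof. by rewrite size_map size_iota. Qed.

Lemma nth_cv' x k : (k < 8)%N -> nth 0 (cv x) k = Defs.coord x (o8 k).
Proof. by move=> hk; rewrite (nth_map 0%N) ?size_iota // nth_iota. Qed.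

Lemma nth_cv x (i : 'I_8) : nth 0 (cv x) i = Defs.coord x i.
Proof. by rewrite nth_cv' // o8K. Qed.

Lemma dot_cv x y : dot x y = cdot (cv x) (cv y).
Proof.
rewrite cdot_sum ?size_cv // /dot big8 big_seq [RHS]big_seq; apply: eq_bigr => k.
by rewrite mem_iota add0n => hk; rewrite !nth_cv'.
Qed.

Lemma coord_trit x i : Defs.coord x i \in trits.
Proof. by rewrite /Defs.coord; case: (x i) => [[|[|[|m]]] hm]. Qed.

Lemma cv_trits x : all (fun z => z \in trits) (cv x).
Proof. by apply/allP => z /mapP [k _ ->]; apply: coord_trit. Qed.

Definition o3 (k : nat) : 'I_3 := @Ordinal 3 (k %% 3) (ltn_pmod k (isT : (0 < 3)%N)).
Definition tov (l : seq int) : Vec := [ffun i : 'I_8 => o3 (absz (nth 0 l i + 1))].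

Lemma cv_tov l : size l = 8%N -> all (fun z => z \in trits) l -> cv (tov l) = l.
Proof.
move=> hl /allP ht; apply: (@eq_from_nth _ 0); first by rewrite size_cv hl.
move=> k; rewrite size_cv => hk; rewrite nth_cv' // /Defs.coord ffunE.
have : nth 0 l (o8 k) \in trits by apply: ht; apply: mem_nth; rewrite hl /= modn_small.
rewrite /= modn_small //.
by rewrite !inE => /or3P [] /eqP ->.
Qed.

Lemma cv_inj : injective cv.
Proof.
move=> x y h; apply/ffunP => i; apply: val_inj.
have := congr1 (fun l => nth 0 l i) h; rewrite /= !nth_cv /Defs.coord; lia.
Qed.

Lemma cv_negv x : cv (negv x) = negl (cv x).
Proof.
apply: (@eq_from_nth _ 0); first by rewrite size_negl !size_cv.
move=> k; rewrite size_cv => hk; rewrite nth_negl !nth_cv' // /Defs.coord /negv ffunE.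
have h3 := ltn_ord (x (o8 k)).
rewrite inordK; last by rewrite ltnS leq_subr.
lia.
Qed.

Lemma negvK x : negv (negv x) = x.
Proof. by apply: cv_inj; rewrite !cv_negv neglK. Qed.


Lemma is_root_cv x : is_root x = croot (cv x).
Proof.
rewrite /is_root /croot.
have -> : #|[pred i | Defs.coord x i != 0]| = count (fun z => z != 0) (cv x).
  by rewrite -sum1_card big_mkcond big8 /= !big_cons big_nil.
have -> : [forall i, Defs.coord x i != 0] = all (fun z => z != 0) (cv x).
  apply/forallP/allP => [H z /mapP [k _ ->] | H i]; first exact: H.
  by apply: H; rewrite -nth_cv; apply: mem_nth; rewrite size_cv.
have -> : \prod_(i < 8) Defs.coord x i = foldr *%R 1 (cv x).
  by rewrite big8 /= !big_cons big_nil.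
by [].
Qed.

Lemma all8_mem l : size l = 8%N -> all (fun z => z \in trits) l -> l \in all8.
Proof.
rewrite /all8; move: 8%N => k; elim: k l => [|k IH] [|a l] //.
move=> /eqP; rewrite eqSS => /eqP hl /andP [ha hl']; rewrite iterS.
apply/flattenP; exists [seq a :: t | t <- iter k (fun s => flatten [seq [seq a0 :: t | t <- s] | a0 <- trits]) [:: [::]]].
  by apply/mapP; exists a.
by apply: map_f; apply: IH.
Qed.

Lemma root_croots x : is_root x -> cv x \in croots.
Proof. by move=> hr; rewrite mem_filter -is_root_cv hr all8_mem ?size_cv ?cv_trits. Qed.

Definition rep (u : Vertex) : Vec := locked (xchoose (existsP (valP u))).

Lemma rep_spec u : is_root (rep u) /\ val u = [set rep u; negv (rep u)].
Proof. by rewrite /rep -lock; have /andP [h /eqP e] := xchooseP (existsP (valP u)). Qed.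

Definition cvr u := cv (rep u).

Lemma cvr_croots (u : Vertex) : cvr u \in croots.
Proof. by apply: root_croots; case: (rep_spec u). Qed.

Lemma mem_vertex (u : Vertex) z : z \in val u -> peq (cv z) (cvr u).
Proof.
case: (rep_spec u) => _ ->; rewrite in_set2 => /orP [] /eqP ->.
  exact: peq_refl.
by rewrite cv_negv peq_negll peq_refl.
Qed.

Lemma rep_in (u : Vertex) : rep u \in val u.
Proof. by case: (rep_spec u) => _ ->; rewrite in_set2 eqxx. Qed.

Lemma negrep_in (u : Vertex) : negv (rep u) \in val u.
Proof. by case: (rep_spec u) => _ ->; rewrite in_set2 eqxx orbT. Qed.

Lemma adjE8_cv u v : adjE8 u v = orth (cvr u) (cvr v).
Proof.
apply/existsP/idP => [[x /andP [hx /existsP [y /andP [hy]]]] | H].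
  by rewrite dot_cv -/(orth _ _) (orth_peql _ (mem_vertex hx)) (orth_peqr _ (mem_vertex hy)).
exists (rep u); rewrite rep_in /=; apply/existsP; exists (rep v); by rewrite rep_in /= dot_cv.
Qed.

Lemma applyM_cv n x (i : 'I_8) : (n < 64)%N -> applyM (trn n) x i = nth 0 (capp n (cv x)) i.
Proof.
move=> hn; rewrite nth_capp // /applyM.
have hp := pmf_lt hn (ltn_ord i).
have T : forall j : 'I_8, tens3 (trn n) i j = if (j == pmf n i :> nat) then psf n i else 0.
  move=> j; have := k1; rewrite /k1check => /allP /(_ n); rewrite mem_iota add0n => /(_ hn).
  move=> /allP /(_ i); rewrite mem_iota add0n => /(_ (ltn_ord i)).
  move=> /allP /(_ j); rewrite mem_iota add0n => /(_ (ltn_ord j)).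
  by rewrite !o8K => /eqP.
rewrite (bigD1 (o8 (pmf n i))) //= big1 ?addr0 => [|j hj].
  by rewrite T /= modn_small // eqxx nth_cv'.
rewrite T ifN ?mul0r //; apply: contra hj => /eqP e.
by apply/eqP/val_inj; rewrite /= e modn_small.
Qed.

Lemma sameOrbit_cv u v :
  sameOrbit u v <-> exists2 n, (n < 64)%N & peq (capp n (cvr u)) (cvr v).
Proof.
split.
  move=> /existsP [p /existsP [x /andP [hx /existsP [y /andP [hy /forallP H]]]]].
  have [n hn ep] := trn_surj p; exists n => //.
  have E : cv y = capp n (cv x).
    apply: (@eq_from_nth _ 0); first by rewrite size_cv size_capp.
    move=> k; rewrite size_cv => hk.
    have := H (o8 k); rewrite -ep applyM_cv // nth_cv' // => /eqP ->.
    by rewrite /= modn_small.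
  apply: peq_trans (mem_vertex hy); rewrite E; apply: capp_peq.
  by rewrite peq_sym; apply: mem_vertex.
move=> [n hn hp].
have [y [hy E]] : exists y, y \in val v /\ cv y = capp n (cvr u).
  case/peqP: hp => e.
    by exists (rep v); rewrite rep_in e.
  by exists (negv (rep v)); rewrite negrep_in cv_negv e.
apply/existsP; exists (trn n); apply/existsP; exists (rep u); rewrite rep_in /=.
apply/existsP; exists y; rewrite hy /=; apply/forallP => i.
by rewrite applyM_cv // -/(cvr u) -E nth_cv.
Qed.


Lemma k5P l n : l \in croots -> (n < 64)%N -> capp n l \in croots.
Proof.
move=> hl hn; have := k5; rewrite /k5check => /allP /(_ l hl) /allP /(_ n).
rewrite mem_iota add0n => /(_ hn) /andP [h1 h2].
by rewrite mem_filter h1 all8_mem ?size_capp.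
Qed.

Lemma k8P l : l \in croots -> orth l l = false.
Proof. by move=> hl; have := k8; rewrite /k8check => /allP /(_ l hl) /negbTE. Qed.

Lemma valid_orb (w : Vertex -> Vec) s : valid_choice w ->
  cv (w s) \in croots /\ exists2 h, (h < 64)%N & peq (cv (w s)) (capp h (cvr s)).
Proof.
move=> [H _]; have [hr [u [hu hso]]] := H s; split; first exact: root_croots.
have [n hn hp] := (sameOrbit_cv s u).1 hso; exists n => //.
by apply: peq_trans (mem_vertex hu) _; rewrite peq_sym.
Qed.

Lemma cvr_size (u : Vertex) : size (cvr u) = 8%N. Proof. exact: size_cv. Qed.

Section Main.
Variables (w1 w2 : Vertex -> Vec).
Hypotheses (h1 : valid_choice w1) (h2 : valid_choice w2).

Definition Pf s := find (fun n => peq (capp n (cv (w1 s))) (cv (w2 s))) (iota 0 64).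

Lemma Pf_spec s : (Pf s < 64)%N /\ peq (capp (Pf s) (cv (w1 s))) (cv (w2 s)).
Proof.
have [_ [ha ha1 e1]] := valid_orb s h1; have [_ [hb hb1 e2]] := valid_orb s h2.
have [hx _ _] := k3P hb1 ha1.
have hh : has (fun n => peq (capp n (cv (w1 s))) (cv (w2 s))) (iota 0 64).
  apply/hasP; exists (Nat.lxor hb ha); first by rewrite mem_iota.
  apply: peq_trans (capp_peq _ e1) _; apply: peq_trans (capp_comp _ hx ha1) _.
  by rewrite Nat.lxor_assoc Nat.lxor_nilpotent Nat.lxor_0_r peq_sym.
have hf : (Pf s < 64)%N by rewrite -[64%N](size_iota 0) -has_find.
split => //; have := nth_find 0%N hh; by rewrite nth_iota.
Qed.

Definition fv s := capp (Pf s) (cvr s).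

Lemma fv_croots s : fv s \in croots.
Proof. by apply: k5P (cvr_croots s) (Pf_spec s).1. Qed.

Definition Fs s : {set Vec} := [set tov (fv s); negv (tov (fv s))].

Lemma Fs_vertex s : is_vertex (Fs s).
Proof.
apply/existsP; exists (tov (fv s)); rewrite eqxx andbT is_root_cv.
have [hs ht] := croots_shape (fv_croots s).
by rewrite cv_tov //; move: (fv_croots s); rewrite mem_filter => /andP [].
Qed.

Definition f (s : Vertex) : Vertex := insubd s (Fs s).

Lemma cvr_f s : peq (fv s) (cvr (f s)).
Proof.
have hin : tov (fv s) \in val (f s).
  rewrite /f insubdK; [by rewrite /Fs in_set2 eqxx | exact: Fs_vertex].
have [hs ht] := croots_shape (fv_croots s).
by have := mem_vertex hin; rewrite cv_tov.
Qed.

Lemma orb_f s : sameOrbit s (f s).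
Proof. apply/sameOrbit_cv; exists (Pf s); [exact: (Pf_spec s).1 | exact: cvr_f]. Qed.

Lemma w_f (w : Vertex -> Vec) s : valid_choice w -> w (f s) = w s.
Proof. by move=> [_ hc]; symmetry; apply: hc; apply: orb_f. Qed.

Lemma Pf_eq s t : sameOrbit s t -> Pf s = Pf t.
Proof. move=> h; case: h1 => _ c1; case: h2 => _ c2; by rewrite /Pf (c1 _ _ h) (c2 _ _ h). Qed.

Lemma f_inj : injective f.
Proof.
move=> s t e.
have hp : peq (fv s) (fv t).
  apply: peq_trans (cvr_f s) _; rewrite e peq_sym; exact: cvr_f.
have [hs _] := Pf_spec s; have [ht _] := Pf_spec t.
have [hx _ _] := k3P ht hs.
have q1 : peq (cvr t) (capp (Pf t) (fv t)).
  rewrite peq_sym; apply: capp_invol => //; exact: cvr_size.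
have q2 : peq (capp (Pf t) (fv t)) (capp (Pf t) (fv s)) by apply: capp_peq; rewrite peq_sym.
have ho : sameOrbit s t.
  apply/sameOrbit_cv; exists (Nat.lxor (Pf t) (Pf s)) => //.
  have q3 : peq (capp (Pf t) (fv s)) (capp (Nat.lxor (Pf t) (Pf s)) (cvr s)) by apply: capp_comp.
  rewrite peq_sym; exact: (peq_trans q1 (peq_trans q2 q3)).
have hxs : peq (cvr t) (cvr s).
  have q4 : peq (capp (Pf t) (fv s)) (cvr s).
    rewrite /fv -(Pf_eq ho); apply: capp_invol => //; exact: cvr_size.
  exact: (peq_trans q1 (peq_trans q2 q4)).
apply: val_inj; case: (rep_spec s) => _ ->; case: (rep_spec t) => _ ->.
case/peqP: hxs => hh.
  by rewrite (cv_inj hh).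
have -> : rep t = negv (rep s) by apply: cv_inj; rewrite cv_negv.
by rewrite negvK setUC.
Qed.

Lemma dot_orth x y : (dot x y == 0) = orth (cv x) (cv y).
Proof. by rewrite dot_cv. Qed.

Lemma xorif (c d : bool) : (if ~~ c then d else ~~ d) = c (+) d.
Proof. by case: c; case: d. Qed.

Lemma lx4 a b c d : Nat.lxor (Nat.lxor a b) (Nat.lxor c d) = Nat.lxor (Nat.lxor a c) (Nat.lxor b d).
Proof.
rewrite !Nat.lxor_assoc; congr Nat.lxor.
by rewrite -!Nat.lxor_assoc (Nat.lxor_comm b c).
Qed.

Lemma aff_final (phi : nat -> bool) (d : seq bool) (b : bool) a1 a2 a3 a4 :
  phi 0%N = b -> (forall n, (n < 64)%N -> phi n = phi 0%N (+) linb d n) ->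
  (Nat.lxor a3 a4 < 64)%N -> (Nat.lxor (Nat.lxor a1 a3) (Nat.lxor a2 a4) < 64)%N ->
  (Nat.lxor a1 a2 < 64)%N ->
  phi (Nat.lxor a3 a4) (+) b = phi (Nat.lxor (Nat.lxor a1 a3) (Nat.lxor a2 a4)) (+) phi (Nat.lxor a1 a2).
Proof.
move=> <- hd q1 q2 q3; rewrite (hd _ q1) (hd _ q2) (hd _ q3) lx4 !linbD.
move: (phi 0%N) (linb d a1) (linb d a2) (linb d a3) (linb d a4) => A B C D G.
by case: A; case: B; case: C; case: D; case: G.
Qed.

Lemma f_adj s t : adjGw w1 s t = adjGw w2 (f s) (f t).
Proof.
rewrite /adjGw (w_f _ h2) (w_f _ h2) !adjE8_cv !dot_orth !xorif.
have [hs hsp] := Pf_spec s; have [ht htp] := Pf_spec t.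
have c1 := cvr_f s; have c2 := cvr_f t; rewrite peq_sym in c1; rewrite peq_sym in c2.
rewrite (orth_peql _ c1) (orth_peqr _ c2) /fv orth_capp2 ?cvr_size //.
have [hst _ _] := k3P hs ht.
have E0 : orth (cvr s) (cvr t) = orth (cvr s) (capp 0 (cvr t)) by rewrite capp0 ?cvr_size.
case: (boolP (sameOrbit s t)) => ho.
  have e1 := h1.2 _ _ ho; have e2 := h2.2 _ _ ho.
  rewrite -e1 -e2 -(Pf_eq ho) Nat.lxor_nilpotent -E0.
  have [hr1 _] := valid_orb s h1; have [hr2 _] := valid_orb s h2.
  by rewrite (k8P hr1) (k8P hr2).
have hno : forall n, (n < 64)%N -> ~~ peq (capp n (cvr t)) (cvr s).
  move=> n hn; apply/negP => hp; apply: (negP ho); apply/sameOrbit_cv; exists n => //.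
  rewrite peq_sym; apply: peq_trans (capp_peq n hp).
  rewrite peq_sym; apply: capp_invol => //; exact: cvr_size.
have [d hd] := aff (cvr_croots s) (cvr_croots t) hno.
have [_ [H hH eH]] := valid_orb s h1; have [_ [K hK eK]] := valid_orb t h1.
have [hHK _ _] := k3P hH hK.
have [hsH _ _] := k3P hs hH; have [htK _ _] := k3P ht hK.
have [hall _ _] := k3P hsH htK.
rewrite (orth_peql _ eH) (orth_peqr _ eK) orth_capp2 ?cvr_size //.
have f1 : peq (cv (w2 s)) (capp (Nat.lxor (Pf s) H) (cvr s)).
  rewrite peq_sym in hsp; apply: peq_trans hsp _.
  apply: peq_trans (capp_peq _ eH) _; exact: capp_comp.
have f2 : peq (cv (w2 t)) (capp (Nat.lxor (Pf t) K) (cvr t)).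
  rewrite peq_sym in htp; apply: peq_trans htp _.
  apply: peq_trans (capp_peq _ eK) _; exact: capp_comp.
rewrite (orth_peql _ f1) (orth_peqr _ f2) orth_capp2 ?cvr_size //.
exact: (aff_final (phi := fun n => orth (cvr s) (capp n (cvr t))) (esym E0) hd hHK hall hst).
Qed.

End Main.

Theorem corollary3p11 (w1 w2 : Vertex -> Vec) :
  valid_choice w1 -> valid_choice w2 ->
  exists f : Vertex -> Vertex,
    bijective f /\ forall s t : Vertex, adjGw w1 s t = adjGw w2 (f s) (f t).
Proof.
move=> h1 h2; exists (f w1 w2); split; first exact: injF_bij (f_inj h1 h2).
exact: f_adj.
Qed.
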